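(* Assume $\mathcal{Z}$ is norm-Euclidean. Then there is a constant $R_2>0$ such that for every digit string $s$ with $n=|s|$ and all $x,y\in C_s$, $d(x,y)\le R_2\,d(T^nx,T^ny)$.
   Context: $X=\mathbb{R}^d$ (including $\mathbb{C},\mathbb{H},\mathbb{O}$ as $\mathbb{R}^2,\mathbb{R}^4,\mathbb{R}^8$) with Euclidean norm and distance $d$. $\iota:X\setminus\{0\}\to X\setminus\{0\}$ satisfies $|\iota x|=1/|x|$, $d(\iota x,\iota y)=d(x,y)/(|x||y|)$ and $\iota\circ\iota=\mathrm{id}$; $\iota(0)=0$. $\mathcal{Z}$ is a discrete additive subgroup with compact quotient, $K=\{x:d(x,0)\le d(x,z)\ \forall z\in\mathcal{Z}\}$ its Dirichlet region with a boundary choice so each $x$ has a unique $[x]\in\mathcal{Z}$ with $x-[x]\in K$; norm-Euclidean means $\sup_{x\in K}|x|<1$. $Tx=\iota x-[\iota x]$ ($x\ne0$), $T0=0$. Cylinders: $C_\emptyset=K$, $C_{as}=K\cap\iota(C_s+a)$ for $a\in\mathcal{Z}$. *)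

(* Defs.v *)
From HB Require Import structures.
From mathcomp Require Import all_boot all_order all_algebra.
From mathcomp Require Import classical_sets reals.
Set Implicit Arguments. Unset Strict Implicit. Unset Printing Implicit Defensive.
Import Order.TTheory GRing.Theory Num.Theory.
Local Open Scope ring_scope.
Local Open Scope classical_set_scope.

Definition enorm (R : realType) (d : nat) (x : 'rV[R]_d) : R :=
  Num.sqrt (\sum_(i < d) x ord0 i ^+ 2).

Definition edist (R : realType) (d : nat) (x y : 'rV[R]_d) : R := enorm (x - y).

Definition Tmap (R : realType) (d : nat) (iota brk : 'rV[R]_d -> 'rV[R]_d)
  (x : 'rV[R]_d) : 'rV[R]_d :=
  if x == 0 then 0 else iota x - brk (iota x).

Fixpoint cyl (R : realType) (d : nat) (iota : 'rV[R]_d -> 'rV[R]_d)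
  (K : set 'rV[R]_d) (s : seq 'rV[R]_d) : set 'rV[R]_d :=
  match s with
  | [::] => K
  | a :: s' => K `&` (iota @` [set y + a | y in cyl iota K s'])
  end.

(* Main.v *)
Require Import Defs.
From HB Require Import structures.
From mathcomp Require Import all_boot all_order all_algebra.
From mathcomp Require Import classical_sets reals.
Import Order.TTheory GRing.Theory Num.Theory.
Local Open Scope ring_scope.
Local Open Scope classical_set_scope.
Section E.
Variables (R : realType) (d : nat).
Implicit Types x y : 'rV[R]_d.

Lemma enorm_ge0 x : 0 <= enorm x.
Proof. exact: sqrtr_ge0. Qed.

Lemma enorm0 : enorm (0 : 'rV[R]_d) = 0.
Proof. by rewrite /enorm big1 ?sqrtr0 // => i _; rewrite mxE expr0n. Qed.

Lemma enormN x : enorm (- x) = enorm x.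
Proof. by rewrite /enorm; apply: congr1; apply: eq_bigr => i _; rewrite mxE sqrrN. Qed.

Lemma enorm_eq0 x : enorm x = 0 -> x = 0.
Proof.
move=> /eqP; rewrite sqrtr_eq0 => hle.
have hs : \sum_(i < d) x ord0 i ^+ 2 = 0.
  by apply/eqP; rewrite eq_le hle sumr_ge0 // => i _; rewrite sqr_ge0.
apply/rowP => i; rewrite mxE.
have := psumr_eq0P (fun j _ => sqr_ge0 (x ord0 j)) hs (i:=i) isT.
by move/eqP; rewrite sqrf_eq0 => /eqP; rewrite (ord1 ord0).
Qed.

Lemma gt1_inv (t : R) : 1 < t -> t^-1 <= t.
Proof.
move=> h; have t0 : 0 < t by apply: lt_trans h.
rewrite -[t^-1]mul1r ler_pdivrMr //.
by rewrite -expr2 (le_trans (ltW h)) // ler_eXnr // ltW.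
Qed.
End E.
Theorem lemma4p4 (R : realType) (d : nat)
  (iota : 'rV[R]_d -> 'rV[R]_d) (Z K : set 'rV[R]_d) (brk : 'rV[R]_d -> 'rV[R]_d)
  (* properties of the inversion iota *)
  (hi_norm : forall x, x != 0 -> enorm (iota x) = (enorm x)^-1)
  (hi_dist : forall x y, x != 0 -> y != 0 ->
      edist (iota x) (iota y) = edist x y / (enorm x * enorm y))
  (hi_inv : forall x, x != 0 -> iota (iota x) = x)
  (hi_0 : iota 0 = 0)
  (* Z is an additive subgroup *)
  (hZ0 : Z 0) (hZsub : forall a b, Z a -> Z b -> Z (a - b))
  (* Z is discrete *)
  (hZdisc : forall z, Z z -> exists2 r : R, 0 < r &
      forall w, Z w -> edist w z < r -> w = z)
  (* compact quotient X/Z: a bounded set of representatives *)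
  (hZcocpt : exists M : R, forall x, exists2 z, Z z & edist x z <= M)
  (* K is the Dirichlet region with a boundary choice *)
  (hK_dir : forall x, K x -> forall z, Z z -> edist x 0 <= edist x z)
  (hbrkZ : forall x, Z (brk x))
  (hbrkK : forall x, K (x - brk x))
  (hbrk_uniq : forall x z, Z z -> K (x - z) -> z = brk x)
  (* norm-Euclidean: sup_{x in K} |x| < 1 *)
  (hNE : exists2 c : R, c < 1 & forall x, K x -> enorm x <= c) :
  exists2 R2 : R, 0 < R2 &
    forall s : seq 'rV[R]_d, (forall a, a \in s -> Z a) ->
    forall x y, cyl iota K s x -> cyl iota K s y ->
      edist x y <= R2 * edist (iter (size s) (Tmap iota brk) x)
                               (iter (size s) (Tmap iota brk) y).
Proof.
have [c c1 hc] := hNE.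
have Kne : forall w, w != 0 -> K (iota w) -> 1 < enorm w.
  move=> w w0 Kw.
  have np : 0 < enorm w.
    rewrite lt_neqAle enorm_ge0 andbT eq_sym; apply/eqP => /enorm_eq0 /eqP.
    by rewrite (negbTE w0).
  rewrite -invf_lt1 // -hi_norm //.
  exact: le_lt_trans (hc _ Kw) c1.
have y0 : forall y a, K y -> Z a -> y + a = 0 -> y = 0 /\ a = 0.
  move=> y a Ky Za /eqP; rewrite addr_eq0 => /eqP ey.
  have Zy : Z y by rewrite ey -sub0r; apply: hZsub.
  have := hK_dir _ Ky _ Zy; rewrite /edist subrr subr0 enorm0 => hy.
  have yz : y = 0 by apply: enorm_eq0; apply/eqP; rewrite eq_le hy enorm_ge0.
  by split=> //; rewrite -[a]opprK -ey yz oppr0.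
have stepT : forall y a, K y -> Z a -> Tmap iota brk (iota (y + a)) = y.
  move=> y a Ky Za; case: (eqVneq (y + a) 0) => [w0|w0].
    have [-> ->] := y0 _ _ Ky Za w0.
    by rewrite addr0 hi_0 /Tmap eqxx.
  have iw : iota (y + a) != 0.
    apply/eqP => h; have := hi_norm _ w0; rewrite h enorm0 => /esym /eqP.
    rewrite invr_eq0 => /eqP /enorm_eq0 /eqP; by rewrite (negbTE w0).
  rewrite /Tmap (negbTE iw) hi_inv // -(hbrk_uniq (y + a) a) //.
    by rewrite addrK.
  by rewrite addrK.
have cylK : forall s x, cyl iota K s x -> K x by case => [|a s] x //= [].
have dstep : forall y y' a, K y -> K y' -> Z a -> K (iota (y + a)) ->
    K (iota (y' + a)) -> edist (iota (y + a)) (iota (y' + a)) <= edist y y'.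
  move=> y y' a Ky Ky' Za K1 K2.
  case: (eqVneq (y + a) 0) => [w0|w0]; case: (eqVneq (y' + a) 0) => [w0'|w0'].
  - have [-> ->] := y0 _ _ Ky Za w0; have [-> _] := y0 _ _ Ky' Za w0'.
    by rewrite !addr0 hi_0 /edist !subrr enorm0 lexx.
  - have [ey ea] := y0 _ _ Ky Za w0; rewrite ey ea in w0 w0' K2 *; rewrite addr0 in K2 w0'.
    rewrite !addr0 hi_0 /edist !sub0r !enormN hi_norm //.
    by apply: gt1_inv; apply: Kne.
  - have [ey ea] := y0 _ _ Ky' Za w0'; rewrite ey ea in w0 w0' K1 *; rewrite addr0 in K1 w0.
    rewrite !addr0 hi_0 /edist !subr0 hi_norm //.
    by apply: gt1_inv; apply: Kne.
  - rewrite hi_dist //.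
    have -> : edist (y + a) (y' + a) = edist y y'.
      by rewrite /edist [y' + a]addrC addrKA.
    have P1 : 1 <= enorm (y + a) * enorm (y' + a).
      by apply: mulr_ege1; apply: ltW; apply: Kne.
    have P0 : 0 < enorm (y + a) * enorm (y' + a) by apply: lt_le_trans P1.
    by rewrite ler_pdivrMr // ler_peMr // enorm_ge0.
exists 1 => //.
elim=> [|a s IH] hs x y /=.
  by move=> _ _; rewrite mul1r.
case=> Kx [w [y1 cy1 ew] ex]; case=> Ky [w' [y1' cy1' ew'] ey].
subst.
have Za : Z a by apply: hs; rewrite mem_head.
have hs' : forall b, b \in s -> Z b by move=> b hb; apply: hs; rewrite in_cons hb orbT.
rewrite -!iterS !iterSr !stepT ?(cylK _ _ cy1) ?(cylK _ _ cy1') //.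
apply: le_trans (IH hs' _ _ cy1 cy1').
by apply: dstep => //; [apply: (cylK _ _ cy1) | apply: (cylK _ _ cy1')].
- exact: (cylK _ _ cy1').
- exact: (cylK _ _ cy1).
Qed.
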